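(* Consider the Bregman proximal augmented Lagrangian method described in the context, with $\psi,\phi$ Legendre. Then for every $x\in\operatorname{dom}\psi$, $y\in\operatorname{dom}\phi$, $z=(x,y)$ and every $k$, $$L(s^k,y)-L(x,y^{k+1})\le\tfrac{1}{\sigma_k}\Big(D_\Phi(z,z^k)-D_\Phi(z,z^{k+1})-(1-\rho_k)D_\Phi(p^k,z^k)\Big),$$ where $z^k=(x^k,y^k)$, $p^k=(s^k,y^{k+1})$ and $D_\Phi((x',y'),(x'',y''))=D_\psi(x',x'')+D_\phi(y',y'')$.
   Context: Let $f\in\Gamma_0(\mathbb{R}^n)$, $g\in\Gamma_0(\mathbb{R}^m)$ (proper lsc convex), $A\in\mathbb{R}^{m\times n}$, $b\in\mathbb{R}^m$, $\mathcal{A}(x)=Ax-b$. $L(x,y)=f(x)+\langle\mathcal{A}(x),y\rangle-g^*(y)$; KKT operator $T(x,y)=(\partial f(x)+A^\top y)\times(\partial g^*(y)+b-Ax)$ (maximal monotone). A function $h\in\Gamma_0$ is Legendre if essentially smooth ($\operatorname{int}\operatorname{dom}h\ne\emptyset$, differentiable there, $\|\nabla h(z^\nu)\|\to\infty$ whenever $\operatorname{int}\operatorname{dom}h\ni z^\nu\to z\in\operatorname{bdry}\operatorname{dom}h$) and essentially strictly convex (strictly convex on every convex subset of $\operatorname{dom}\partial h$); $\nabla h^*$ is the inverse of $\nabla h$ on interiors of domains. $D_h(a,c)=h(a)-h(c)-\langle\nabla h(c),a-c\rangle$ for $a\in\operatorname{dom}h$, $c\in\operatorname{int}\operatorname{dom}h$,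 $+\infty$ otherwise. Let $\psi\in\Gamma_0(\mathbb{R}^n)$, $\phi\in\Gamma_0(\mathbb{R}^m)$ be Legendre, $\Phi(x,y)=\psi(x)+\phi(y)$, and assume $\operatorname{int}\operatorname{dom}\Phi\cap\operatorname{dom}T\ne\emptyset$. Bregman proximal augmented Lagrangian method: given $x^0\in\operatorname{int}\operatorname{dom}\psi$, $y^0\in\operatorname{int}\operatorname{dom}\phi$, step sizes $\sigma_k\ge\sigma>0$ and $\rho_k\in[0,1)$, it generates $s^k\in\operatorname{dom}\psi$, $x^{k+1},y^{k+1},v^k,u^k$ with $(v^k,u^k)\in T(s^k,y^{k+1})$, $x^{k+1}=\nabla\psi^*(\nabla\psi(x^k)-\sigma_kv^k)\in\operatorname{int}\operatorname{dom}\psi$, $y^{k+1}=\nabla\phi^*(\nabla\phi(y^k)-\sigma_ku^k)\in\operatorname{int}\operatorname{dom}\phi$, and $D_\psi(s^k,x^{k+1})\le\rho_k\big(D_\psi(s^k,x^k)+D_\phi(y^{k+1},y^k)\big)$. *)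

(* Defs.v *)
From HB Require Import structures.
From mathcomp Require Import all_boot all_order all_algebra.
From mathcomp Require Import all_classical all_reals all_analysis.
Set Implicit Arguments. Unset Strict Implicit. Unset Printing Implicit Defensive.
Import Order.TTheory GRing.Theory Num.Theory.
Import numFieldNormedType.Exports.
Local Open Scope classical_set_scope.
Local Open Scope ring_scope.

Section Defs.
Variable R : realType.

Definition dotv n (u v : 'cV[R]_n) : R := \sum_(i < n) u i 0 * v i 0.

Definition edom n (h : 'cV[R]_n -> \bar R) : set 'cV[R]_n :=
  [set x | (h x < +oo)%E].

Definition proper_fun n (h : 'cV[R]_n -> \bar R) : Prop :=
  (forall x, h x != -oo%E) /\ exists x, (h x < +oo)%E.

Definition convex_fun n (h : 'cV[R]_n -> \bar R) : Prop :=
  forall (x y : 'cV[R]_n) (t : R), 0 < t -> t < 1 ->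
    (h (t *: x + (1 - t) *: y)%R <= t%:E * h x + (1 - t)%:E * h y)%E.

Definition Gamma0 n (h : 'cV[R]_n -> \bar R) : Prop :=
  [/\ proper_fun h, lower_semicontinuous h & convex_fun h].

Definition conjf n (h : 'cV[R]_n -> \bar R) : 'cV[R]_n -> \bar R :=
  fun y => ereal_sup [set ((dotv x y)%:E - h x)%E | x in [set: 'cV[R]_n]].

Definition subdiff n (h : 'cV[R]_n -> \bar R) (x : 'cV[R]_n) : set 'cV[R]_n :=
  [set v | h x \is a fin_num /\
           forall z, (h x + (dotv v (z - x)%R)%:E <= h z)%E].

Definition dom_subdiff n (h : 'cV[R]_n -> \bar R) : set 'cV[R]_n :=
  [set x | exists v, subdiff h x v].

(* gradient (Frechet derivative of the real-valued restriction, represented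
   as a vector through the standard basis) *)
Definition gradf n (h : 'cV[R]_n -> \bar R) (c : 'cV[R]_n) : 'cV[R]_n :=
  \col_(i < n) ('d (fine \o h) c (delta_mx i 0 : 'cV[R]_n)).

Definition convex_setv n (C : set 'cV[R]_n) : Prop :=
  forall x y (t : R), C x -> C y -> 0 <= t -> t <= 1 ->
    C (t *: x + (1 - t) *: y).

Definition strictly_convex_on n (h : 'cV[R]_n -> \bar R) (C : set 'cV[R]_n) :=
  forall x y (t : R), C x -> C y -> x != y -> 0 < t -> t < 1 ->
    (h (t *: x + (1 - t) *: y)%R < t%:E * h x + (1 - t)%:E * h y)%E.

Definition essentially_smooth n (h : 'cV[R]_n -> \bar R) : Prop :=
  [/\ (interior (edom h) !=set0),
      (forall c, interior (edom h) c -> differentiable (fine \o h) c) &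
      (forall (zs : nat -> 'cV[R]_n) (z : 'cV[R]_n),
         (forall k, interior (edom h) (zs k)) ->
         zs @ \oo --> z ->
         closure (edom h) z -> ~ interior (edom h) z ->
         (fun k => `|gradf h (zs k)|) @ \oo --> +oo)].

Definition essentially_strictly_convex n (h : 'cV[R]_n -> \bar R) : Prop :=
  forall C : set 'cV[R]_n, convex_setv C -> C `<=` dom_subdiff h ->
    strictly_convex_on h C.

Definition Legendre n (h : 'cV[R]_n -> \bar R) : Prop :=
  [/\ Gamma0 h, essentially_smooth h & essentially_strictly_convex h].

Definition bregman n (h : 'cV[R]_n -> \bar R) (a c : 'cV[R]_n) : \bar R :=
  if `[< edom h a /\ interior (edom h) c >] then
    (h a - h c - (dotv (gradf h c) (a - c)%R)%:E)%E
  else +oo%E.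

Definition lagr n m (f : 'cV[R]_n -> \bar R) (g : 'cV[R]_m -> \bar R)
  (A : 'M[R]_(m, n)) (b : 'cV[R]_m) (x : 'cV[R]_n) (y : 'cV[R]_m) : \bar R :=
  (f x + (dotv (A *m x - b) y)%:E - conjf g y)%E.

(* KKT operator: (v,u) in T(x,y) *)
Definition KKT n m (f : 'cV[R]_n -> \bar R) (g : 'cV[R]_m -> \bar R)
  (A : 'M[R]_(m, n)) (b : 'cV[R]_m) (x : 'cV[R]_n) (y : 'cV[R]_m)
  (v : 'cV[R]_n) (u : 'cV[R]_m) : Prop :=
  (exists2 a, subdiff f x a & v = a + A^T *m y) /\
  (exists2 c, subdiff (conjf g) y c & u = c + b - A *m x).

End Defs.

(* Main.v *)
Require Import Defs.
From HB Require Import structures.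
From mathcomp Require Import all_boot all_order all_algebra.
From mathcomp Require Import all_classical all_reals all_analysis.
Import Order.TTheory GRing.Theory Num.Theory.
Import numFieldNormedType.Exports.
Local Open Scope classical_set_scope.
Local Open Scope ring_scope.


From mathcomp Require Import ring lra.

Section Helpers.
Variable R : realType.
Local Open Scope ring_scope.

Lemma dotvDl {n} (u w z : 'cV[R]_n) : dotv (u + w) z = dotv u z + dotv w z.
Proof. rewrite /dotv -big_split; apply: eq_bigr => i _; rewrite mxE mulrDl. by []. Qed.
Lemma dotvNl {n} (u z : 'cV[R]_n) : dotv (- u) z = - dotv u z.
Proof. rewrite /dotv -sumrN; apply: eq_bigr => i _; rewrite mxE mulNr. by []. Qed.
Lemma dotvZl {n} a (u z : 'cV[R]_n) : dotv (a *: u) z = a * dotv u z.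
Proof. rewrite /dotv mulr_sumr; apply: eq_bigr => i _; rewrite mxE mulrA. by []. Qed.
Lemma dotvC {n} (u z : 'cV[R]_n) : dotv u z = dotv z u.
Proof. rewrite /dotv; apply: eq_bigr => i _; by rewrite mulrC. Qed.
Lemma dotvDr {n} (u w z : 'cV[R]_n) : dotv z (u + w) = dotv z u + dotv z w.
Proof. by rewrite dotvC dotvDl !(dotvC z). Qed.
Lemma dotvNr {n} (u z : 'cV[R]_n) : dotv z (- u) = - dotv z u.
Proof. by rewrite dotvC dotvNl dotvC. Qed.
Lemma dotvZr {n} a (u z : 'cV[R]_n) : dotv z (a *: u) = a * dotv z u.
Proof. by rewrite dotvC dotvZl dotvC. Qed.

Lemma dotvE {n} (u z : 'cV[R]_n) : dotv u z = (u^T *m z) 0 0.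
Proof. rewrite /dotv mxE; apply: eq_bigr => i _; by rewrite mxE. Qed.

Lemma dotv_tr n m (A : 'M[R]_(m, n)) (y : 'cV[R]_m) (w : 'cV[R]_n) :
  dotv (A^T *m y) w = dotv (A *m w) y.
Proof.
rewrite !dotvE (trmx_mul A^T y) trmxK -mulmxA.
have -> : (A *m w)^T *m y = (y^T *m (A *m w))^T by rewrite [RHS]trmx_mul trmxK.
by rewrite [RHS]mxE.
Qed.


Lemma edom_fin {n} {h : 'cV[R]_n -> \bar R} {a} :
  proper_fun h -> edom h a -> h a \is a fin_num.
Proof. move=> [hN _] ha; by rewrite fin_numE hN (lt_eqF ha). Qed.

Lemma bregmanE {n} (h : 'cV[R]_n -> \bar R) a c :
  proper_fun h -> edom h a -> interior (edom h) c ->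
  bregman h a c = (fine (h a) - fine (h c) - dotv (gradf h c) (a - c))%:E.
Proof.
move=> Ph ha hc; rewrite /bregman asboolT //.
have := edom_fin Ph ha; have := edom_fin Ph (interior_subset hc).
case: (h a) => [ra| |] //; case: (h c) => [rc| |] // _ _ /=.
Qed.

Lemma lagr_bound {n m} f g (A : 'M[R]_(m, n)) b (s xx : 'cV[R]_n) (y1 yy : 'cV[R]_m) v u :
  KKT f g A b s y1 v u ->
  (lagr f g A b s yy - lagr f g A b xx y1 <= (dotv v (s - xx) + dotv u (y1 - yy))%:E)%E.
Proof.
move=> [[a [fs sa] ->] [c [gs sc] ->]].
have fa := sa xx; have gc := sc yy.
rewrite /lagr. move: fs gs fa gc. set G := conjf g.
case: (f s) => [F| |] // _; case: (G y1) => [Gy| |] // _.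
case: (f xx) => [r1| |] //=; case: (G yy) => [r2| |] //=.
2-4: by move=> _ _; rewrite ?addeNy ?addNye leNye.
rewrite -!EFinD !lee_fin => fa gc.
rewrite !(dotvDl, dotvDr, dotvNl, dotvNr) !dotv_tr.
rewrite !dotvDr !dotvNr in fa gc.
lra.
Qed.

End Helpers.

Theorem mainTheorem15 (R : realType) (n m : nat)
  (f : 'cV[R]_n -> \bar R) (g : 'cV[R]_m -> \bar R)
  (A : 'M[R]_(m, n)) (b : 'cV[R]_m)
  (psi : 'cV[R]_n -> \bar R) (phi : 'cV[R]_m -> \bar R)
  (sigma0 : R) (sigma rho : nat -> R)
  (x s v : nat -> 'cV[R]_n) (y u : nat -> 'cV[R]_m) :
  Gamma0 f -> Gamma0 g ->
  Legendre psi -> Legendre phi ->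
  (* int dom Phi meets dom T *)
  (exists x0 y0 v0 u0, interior (edom psi) x0 /\ interior (edom phi) y0 /\
                       KKT f g A b x0 y0 v0 u0) ->
  0 < sigma0 -> (forall k, sigma0 <= sigma k) ->
  (forall k, 0 <= rho k /\ rho k < 1) ->
  interior (edom psi) (x 0%N) -> interior (edom phi) (y 0%N) ->
  (forall k, edom psi (s k)) ->
  (forall k, KKT f g A b (s k) (y k.+1) (v k) (u k)) ->
  (* x^{k+1} = grad psi^* (grad psi (x^k) - sigma_k v^k), i.e. x^{k+1} is the
     point of int dom psi whose gradient is grad psi (x^k) - sigma_k v^k *)
  (forall k, interior (edom psi) (x k.+1) /\
             gradf psi (x k.+1) = gradf psi (x k) - sigma k *: v k) ->
  (forall k, interior (edom phi) (y k.+1) /\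
             gradf phi (y k.+1) = gradf phi (y k) - sigma k *: u k) ->
  (forall k, (bregman psi (s k) (x k.+1) <=
              (rho k)%:E * (bregman psi (s k) (x k) + bregman phi (y k.+1) (y k)))%E) ->
  forall (xx : 'cV[R]_n) (yy : 'cV[R]_m) (k : nat),
    edom psi xx -> edom phi yy ->
    (lagr f g A b (s k) yy - lagr f g A b xx (y k.+1) <=
       (sigma k)^-1%:E *
       ((bregman psi xx (x k) + bregman phi yy (y k))
        - (bregman psi xx (x k.+1) + bregman phi yy (y k.+1))
        - (1 - rho k)%:E * (bregman psi (s k) (x k) + bregman phi (y k.+1) (y k))))%E.
Proof.
move=> Gf Gg [[Ppsi _ _] _ _] [[Pphi _ _] _ _] _ s0pos s0le rhoh x0i y0i sdom kkt
  xh yh inex xx yy k xxd yyd.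
have sigpos : 0 < sigma k by apply: lt_le_trans s0pos (s0le k).
have xint : forall j, interior (edom psi) (x j) by case => [|j] //; case: (xh j).
have yint : forall j, interior (edom phi) (y j) by case => [|j] //; case: (yh j).
have [_ gx] := xh k. have [_ gy] := yh k.
have xk := xint k. have xk1 := xint k.+1. have yk := yint k. have yk1 := yint k.+1.
have yk1d : edom phi (y k.+1) by apply: interior_subset.
have sd := sdom k.
have ineq := inex k.
rewrite !bregmanE // in ineq *.
apply: le_trans (lagr_bound R f g A b (s k) xx (y k.+1) yy (v k) (u k) (kkt k)) _.
do 8 rewrite -?EFinB -?EFinD -?EFinM -?EFinN in ineq *. rewrite !lee_fin in ineq *.
rewrite ler_pdivlMl //.
rewrite gx gy in ineq *.
rewrite !(dotvDl, dotvDr, dotvNl, dotvNr, dotvZl) in ineq *.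
lra.
Qed.
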